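(* Let $d\ge1$, $n\ge3$, $u\in\mathbb{C}\setminus\{0\}$. The defining two-sided ideal of $\mathrm{CTL}_{d,n}(u)$ in $\mathrm{Y}_{d,n}(u)$ is generated by any single element $c_{i,i+1}$, $1\le i\le n-2$. Hence $\mathrm{CTL}_{d,n}(u)$ is presented by generators $t_1,\ldots,t_n,g_1,\ldots,g_{n-1}$, the defining relations of $\mathrm{Y}_{d,n}(u)$, and the relation $c_{1,2}=0$.
   Context: The Yokonuma–Hecke algebra $\mathrm{Y}_{d,n}(u)$ is the unital associative $\mathbb{C}$-algebra with generators $g_1,\ldots,g_{n-1},t_1,\ldots,t_n$ and relations: $g_ig_j=g_jg_i$ for $|i-j|>1$; $g_{i+1}g_ig_{i+1}=g_ig_{i+1}g_i$; $t_it_j=t_jt_i$; $t_i^d=1$; $g_it_i=t_{i+1}g_i$; $g_it_{i+1}=t_ig_i$; $g_it_j=t_jg_i$ for $j\ne i,i+1$; $g_i^2=1+(u-1)e_i+(u-1)e_ig_i$, where $e_i=\frac1d\sum_{s=0}^{d-1}t_i^st_{i+1}^{d-s}$. For $w\in S_n$ with reduced expression $s_{i_1}\cdots s_{i_k}$ put $g_w=g_{i_1}\cdots g_{i_k}$; $g_{i,i+1}=\sum_{w\in\langle s_i,s_{i+1}\rangle}g_w$ and $c_{i,i+1}=\sum_{a,b,c=0}^{d-1}t_i^at_{i+1}^bt_{i+2}^c\,g_{i,i+1}$ (the sum of $t_1^{a_1}\cdots t_n^{a_n}g_w$ over the subgroup $\langle t_i,t_{i+1},t_{i+2}\rangle\rtimes\langle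 s_i,s_{i+1}\rangle$ of $(\mathbb{Z}/d\mathbb{Z})^n\rtimes S_n$). $\mathrm{CTL}_{d,n}(u)$ is the quotient of $\mathrm{Y}_{d,n}(u)$ by the two-sided ideal generated by all $c_{i,i+1}$. *)

(* Defs.v *)
From HB Require Import structures.
From mathcomp Require Import all_boot all_order all_algebra.
From mathcomp Require Import reals complex.
Set Implicit Arguments. Unset Strict Implicit. Unset Printing Implicit Defensive.
Import Order.TTheory GRing.Theory Num.Theory.
Local Open Scope ring_scope.

(* Elements g i (1 <= i <= n-1) and t i (1 <= i <= n) of a C-algebra A,   *)
(* indexed 1-based by natural numbers (values outside the range unused).  *)

Section YH.
Variables (C : fieldType) (A : algType C).
Variables (d n : nat) (u : C) (g t : nat -> A).

Definition yh_e (i : nat) : A :=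
  (d%:R)^-1 *: \sum_(s < d) (t i ^+ s * t i.+1 ^+ (d - s)).

Definition YH_relations : Prop :=
  (forall i j, (1 <= i <= n.-1)%N -> (1 <= j <= n.-1)%N -> (i.+1 < j \/ j.+1 < i)%N ->
         g i * g j = g j * g i) /\
      (forall i, (1 <= i <= n - 2)%N -> g i.+1 * g i * g i.+1 = g i * g i.+1 * g i) /\
      (forall i j, (1 <= i <= n)%N -> (1 <= j <= n)%N -> t i * t j = t j * t i) /\
      (forall i, (1 <= i <= n)%N -> t i ^+ d = 1) /\
      (forall i, (1 <= i <= n.-1)%N ->
         [/\ g i * t i = t i.+1 * g i,
             g i * t i.+1 = t i * g i &
             forall j, (1 <= j <= n)%N -> (j != i)%N -> (j != i.+1)%N -> g i * t j = t j * g i]) /\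
      (forall i, (1 <= i <= n.-1)%N ->
         g i ^+ 2 = 1 + (u - 1) *: yh_e i + (u - 1) *: (yh_e i * g i)).

(* g_{i,i+1} = sum of g_w over w in <s_i, s_{i+1}> (a copy of S_3). *)
Definition yh_gpair (i : nat) : A :=
  1 + g i + g i.+1 + g i * g i.+1 + g i.+1 * g i + g i * g i.+1 * g i.

Definition yh_c (i : nat) : A :=
  (\sum_(a < d) \sum_(b < d) \sum_(c < d)
      (t i ^+ a * t i.+1 ^+ b * t i.+2 ^+ c)) * yh_gpair i.

End YH.

(* Main.v *)
Require Import Defs.
From HB Require Import structures.
From mathcomp Require Import all_boot all_order all_algebra.
From mathcomp Require Import reals complex.
From mathcomp Require Import zify ring.
Import Order.TTheory GRing.Theory Num.Theory.
Local Open Scope ring_scope.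

Section Aux.
Variables (C : fieldType) (A : algType C).

Lemma comm_exp (x a b : A) n : x * a = b * x -> x * a ^+ n = b ^+ n * x.
Proof.
move=> H; elim: n => [|n IH]; first by rewrite !expr0 mulr1 mul1r.
by rewrite exprS mulrA H -mulrA IH exprS mulrA.
Qed.

Lemma chain3 (x1 x2 x3 a0 a1 a2 a3 : A) :
  x3 * a0 = a1 * x3 -> x2 * a1 = a2 * x2 -> x1 * a2 = a3 * x1 ->
  x1 * x2 * x3 * a0 = a3 * (x1 * x2 * x3).
Proof.
move=> H3 H2 H1.
by rewrite -mulrA H3 mulrA -(mulrA x1) H2 mulrA H1 !mulrA.
Qed.

Lemma comm_mono (x a1 a2 a3 b1 b2 b3 : A) p q r :
  x * a1 = b1 * x -> x * a2 = b2 * x -> x * a3 = b3 * x ->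
  x * (a1 ^+ p * a2 ^+ q * a3 ^+ r) = (b1 ^+ p * b2 ^+ q * b3 ^+ r) * x.
Proof.
move=> H1 H2 H3.
rewrite !mulrA (comm_exp _ _ _ p H1) -(mulrA _ x) (comm_exp _ _ _ q H2) mulrA -(mulrA _ x) (comm_exp _ _ _ r H3).
by rewrite !mulrA.
Qed.

Lemma comm_gpair (x a b a' b' : A) : x * a = a' * x -> x * b = b' * x ->
  x * (1 + a + b + a * b + b * a + a * b * a) =
  (1 + a' + b' + a' * b' + b' * a' + a' * b' * a') * x.
Proof.
move=> Ha Hb.
have Hab : x * (a * b) = a' * b' * x by rewrite mulrA Ha -mulrA Hb mulrA.
have Hba : x * (b * a) = b' * a' * x by rewrite mulrA Hb -mulrA Ha mulrA.
have Haba : x * (a * b * a) = a' * b' * a' * x by rewrite mulrA Hab -mulrA Ha mulrA.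
by rewrite !mulrDr !mulrDl mulr1 mul1r Ha Hb Hab Hba Haba.
Qed.

Lemma shift_sum (q : A) m : (0 < m)%N -> q ^+ m = 1 ->
  \sum_(i < m) q ^+ i.+1 = \sum_(i < m) q ^+ i.
Proof.
case: m => [//|m] _ qd.
rewrite big_ord_recr /= qd big_ord_recl /= expr0 addrC.
congr (_ + _); apply: eq_bigr => i _ //.
Qed.

Lemma idem (d : nat) (w v : A) : (0 < d)%N -> (d%:R : C) != 0 ->
  w * v = v * w -> w ^+ d = 1 -> v ^+ d = 1 ->
  ((d%:R : C)^-1 *: \sum_(s < d) (w ^+ s * v ^+ (d - s))) *
  ((d%:R : C)^-1 *: \sum_(s < d) (w ^+ s * v ^+ (d - s))) =
  (d%:R : C)^-1 *: \sum_(s < d) (w ^+ s * v ^+ (d - s)).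
Proof.
move=> d0 dn0 Hwv Hw Hv.
set q := w * v ^+ d.-1.
have cwv : GRing.comm w (v ^+ d.-1) by apply: commrX.
have Hz : forall s : 'I_d, w ^+ s * v ^+ (d - s) = q ^+ s.
  move=> [s /= hs]; rewrite /q exprMn_comm // -exprM.
  case: s hs => [|s] hs; first by rewrite subn0 Hv muln0 expr0.
  rewrite (_ : (d.-1 * s.+1 = (d - s.+1) + d * s)%N); last by lia.
  by rewrite exprD exprM Hv expr1n mulr1.
rewrite (eq_bigr _ (fun s _ => Hz s)).
have qd : q ^+ d = 1.
  by rewrite /q exprMn_comm // -exprM (mulnC d.-1 d) exprM Hv expr1n Hw mulr1.
set S := \sum_(s < d) q ^+ s.
have qS : q * S = S.
  rewrite /S mulr_sumr.
  under eq_bigr do rewrite -exprS.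
  exact: shift_sum.
have qrS : forall r, q ^+ r * S = S.
  by elim=> [|r IH]; [rewrite mul1r | rewrite exprSr -mulrA qS].
rewrite -scalerAl -scalerAr scalerA mulr_suml.
under eq_bigr do rewrite qrS.
rewrite sumr_const card_ord -scaler_nat scalerA -mulrA mulVf //.
by rewrite mulr1.
Qed.

Lemma left_cancel (g e : A) (u : C) : u != 0 -> e * e = e ->
  g ^+ 2 = 1 + (u - 1) *: e + (u - 1) *: (e * g) ->
  forall y, g * y = 0 -> y = 0.
Proof.
move=> u0 ee Hg y gy.
have L : (1 + (u^-1 - 1) *: e) * (g - (u - 1) *: e) * g = 1.
  rewrite -mulrA mulrBl -[(u-1) *: e * g]scalerAl -expr2 Hg addrK.
  rewrite mulrDl mul1r mulrDr mulr1 -scalerAl -scalerAr scalerA ee.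
  rewrite -!addrA -!scalerDl.
  have -> : u - 1 + ((u^-1 - 1) + (u^-1 - 1) * (u - 1)) = 0 by field.
  by rewrite scale0r addr0.
by rewrite -[y]mul1r -L -(mulrA _ g) gy mulr0.
Qed.


Lemma Tsum_comm (d : nat) (t : nat -> A) (x : A) i0 i1 :
  x * t i0 = t i1 * x -> x * t i0.+1 = t i1.+1 * x -> x * t i0.+2 = t i1.+2 * x ->
  x * (\sum_(a < d) \sum_(b < d) \sum_(c < d) (t i0 ^+ a * t i0.+1 ^+ b * t i0.+2 ^+ c))
  = (\sum_(a < d) \sum_(b < d) \sum_(c < d) (t i1 ^+ a * t i1.+1 ^+ b * t i1.+2 ^+ c)) * x.
Proof.
move=> H0 H1 H2.
rewrite mulr_sumr mulr_suml; apply: eq_bigr => a _.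
rewrite mulr_sumr mulr_suml; apply: eq_bigr => b _.
rewrite mulr_sumr mulr_suml; apply: eq_bigr => c _.
exact: comm_mono.
Qed.

Lemma conj_c (d : nat) (g t : nat -> A) (x : A) i0 i1 :
  x * t i0 = t i1 * x -> x * t i0.+1 = t i1.+1 * x -> x * t i0.+2 = t i1.+2 * x ->
  x * g i0 = g i1 * x -> x * g i0.+1 = g i1.+1 * x ->
  x * yh_c d g t i0 = yh_c d g t i1 * x.
Proof.
move=> H0 H1 H2 G0 G1.
rewrite /yh_c /yh_gpair mulrA (Tsum_comm d _ _ _ _ H0 H1 H2) -[_ * x * _]mulrA.
by rewrite (comm_gpair _ _ _ _ _ G0 G1) mulrA.
Qed.

End Aux.

Lemma step (C : fieldType) (A : algType C) d n u (g t : nat -> A) :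
  (0 < d)%N -> (d%:R : C) != 0 -> u != 0 -> YH_relations d n u g t ->
  forall i, (1 <= i)%N -> (i.+1 <= n - 2)%N ->
  (yh_c d g t i = 0 <-> yh_c d g t i.+1 = 0).
Proof.
move=> d0 dn0 u0 [Hc [Hb [Ht [Hd [Hgt Hq]]]]] i i1 in2.
have gcan : forall k, (1 <= k <= n.-1)%N -> forall y, g k * y = 0 -> y = 0.
  move=> k hk; have L := (@left_cancel C A (g k) (yh_e d t k) u u0). apply: (L _ (Hq k hk)); rewrite /yh_e; apply: idem => //.
  - apply: Ht; lia.
  - apply: Hd; lia.
  - apply: Hd; lia.
have gA : forall k, (1 <= k <= n.-1)%N -> g k * t k = t k.+1 * g k.
  by move=> k hk; case: (Hgt k hk).
have gB : forall k, (1 <= k <= n.-1)%N -> g k * t k.+1 = t k * g k.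
  by move=> k hk; case: (Hgt k hk).
have gC : forall k j, (1 <= k <= n.-1)%N -> (1 <= j <= n)%N -> (j != k)%N -> (j != k.+1)%N ->
    g k * t j = t j * g k.
  by move=> k j hk; case: (Hgt k hk) => _ _; apply.
have h0 : (1 <= i <= n.-1)%N by lia.
have h1 : (1 <= i.+1 <= n.-1)%N by lia.
have h2 : (1 <= i.+2 <= n.-1)%N by lia.
have c20 : g i.+2 * g i = g i * g i.+2 by apply: Hc => //; lia.
have b0 : g i.+1 * g i * g i.+1 = g i * g i.+1 * g i by apply: Hb; lia.
have b1 : g i.+2 * g i.+1 * g i.+2 = g i.+1 * g i.+2 * g i.+1 by apply: Hb; lia.
have c20r : forall X, g i.+2 * (g i * X) = g i * (g i.+2 * X) by move=> X; rewrite !mulrA c20.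
have b0r : forall X, g i.+1 * (g i * (g i.+1 * X)) = g i * (g i.+1 * (g i * X)) by move=> X; rewrite !mulrA b0.
have b1r : forall X, g i.+2 * (g i.+1 * (g i.+2 * X)) = g i.+1 * (g i.+2 * (g i.+1 * X)) by move=> X; rewrite !mulrA b1.
have ne : forall a b : nat, (a != b)%N = ~~ (a == b)%N by [].
split => Hci.
-
  have E : g i.+2 * g i.+1 * g i * yh_c d g t i.+1 = yh_c d g t i * (g i.+2 * g i.+1 * g i).
    apply: conj_c.
    + apply: chain3; first exact: gB.
      * apply: gC => //; lia.
      * apply: gC => //; lia.
    + apply: chain3.
      * apply: gC => //; lia.
      * exact: gB.
      * apply: gC => //; lia.
    + apply: chain3.
      * apply: gC => //; lia.
      * apply: gC => //; lia.
      * exact: gB.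
    + by rewrite -[LHS]mulr1 -[RHS]mulr1 -!mulrA b0r c20r.
    + by rewrite -[LHS]mulr1 -[RHS]mulr1 -!mulrA -c20r b1r.
  move: E; rewrite Hci mul0r -!mulrA => /gcan -/(_ h2) /gcan -/(_ h1) /gcan -/(_ h0).
  done.
- have E : g i * g i.+1 * g i.+2 * yh_c d g t i = yh_c d g t i.+1 * (g i * g i.+1 * g i.+2).
    apply: conj_c.
    + apply: chain3.
      * apply: gC => //; lia.
      * apply: gC => //; lia.
      * exact: gA.
    + apply: chain3.
      * apply: gC => //; lia.
      * exact: gA.
      * apply: gC => //; lia.
    + apply: chain3; first exact: gA.
      * apply: gC => //; lia.
      * apply: gC => //; lia.
    + by rewrite -[LHS]mulr1 -[RHS]mulr1 -!mulrA c20r -b0r.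
    + by rewrite -[LHS]mulr1 -[RHS]mulr1 -!mulrA -b1r -c20r.
  move: E; rewrite Hci mul0r -!mulrA => /gcan -/(_ h0) /gcan -/(_ h1) /gcan -/(_ h2).
  done.
Qed.

Theorem corollary2 (R : realType) (d n : nat) (u : R[i]) :
  (1 <= d)%N -> (3 <= n)%N -> u != 0 ->
  forall j : nat, (1 <= j <= n - 2)%N ->
  forall (A : algType R[i]) (g t : nat -> A),
    YH_relations d n u g t -> yh_c d g t j = 0 ->
    forall i : nat, (1 <= i <= n - 2)%N -> yh_c d g t i = 0.
Proof.
move=> d1 n3 u0 j hj A g t Hrel Hcj i hi.
have dn0 : (d%:R : R[i]) != 0 by rewrite pnatr_eq0 -lt0n.
have st := @step _ A d n u g t d1 dn0 u0 Hrel.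

have up : forall m, (j + m <= n - 2)%N -> yh_c d g t (j + m)%N = 0.
  elim=> [|m IH] hm; first by rewrite addn0.
  rewrite addnS; apply: (proj1 (st (j + m)%N ltac:(lia) ltac:(lia))); apply: IH; lia.
have down : forall m, (m < j)%N -> yh_c d g t (j - m)%N = 0.
  elim=> [|m IH] hm; first by rewrite subn0.
  apply: (proj2 (st (j - m.+1)%N ltac:(lia) ltac:(lia))).
  rewrite (_ : (j - m.+1).+1 = j - m)%N; [apply: IH; lia | lia].
case: (leqP j i) => hji.
- have := up (i - j)%N ltac:(lia); by rewrite subnKC.
- have := down (j - i)%N ltac:(lia); rewrite subKn //; exact: ltnW.
Qed.
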